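(* Let $a\ge 2$, $n=2^a$, and let $\mathcal{S}$ be a normalized unitary-weight single-symbol decodable STBC of maximal rate, i.e. with $k=2a$ complex symbols and weight matrices $A_{1I}=I_n, A_{1Q}, A_{iI}, A_{iQ}$ ($2\le i\le 2a$). Then $$A_{1Q}=A_{1Q}^H\ (\text{equivalently } A_{1Q}^2=I_n),\qquad A_{iI}A_{1Q}=A_{1Q}A_{iI},\qquad A_{iQ}=\pm A_{iI}A_{1Q}$$ for $i=2,3,\dots,2a$.
   Context: A linear square STBC with $k$ complex symbols is given by $2k$ weight matrices $A_{iI},A_{iQ}\in\mathbb{C}^{n\times n}$ ($1\le i\le k$), linearly independent over $\mathbb{R}$, with codewords $S=\sum_{i=1}^k(x_{iI}A_{iI}+x_{iQ}A_{iQ})$. It is a unitary-weight single-symbol decodable (SSD) code if: (i) $A_{iI}^HA_{iI}=A_{iQ}^HA_{iQ}=I_n$ for all $i$; (ii) for all $1\le i\ne j\le k$: $A_{iI}^HA_{jQ}+A_{jQ}^HA_{iI}=O_n$, $A_{iI}^HA_{jI}+A_{jI}^HA_{iI}=O_n$, $A_{iQ}^HA_{jQ}+A_{jQ}^HA_{iQ}=O_n$; and (iii) it is not the case that $A_{iI}^HA_{iQ}+A_{iQ}^HA_{iI}=O_n$ for all $i$. It is normalized if $A_{1I}=I_n$. For $n=2^a$ the rate of such a code is at most $2a/2^a$, so maximal rate means $k=2a$. *)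

(* Defs.v *)
(* Complex scalars: an arbitrary numClosedFieldType C
   (e.g. algC, or complex R for a real closed field R), with Num.conj. *)
From HB Require Import structures.
From mathcomp Require Import all_boot all_order all_algebra.
Set Implicit Arguments. Unset Strict Implicit. Unset Printing Implicit Defensive.
Import Order.TTheory GRing.Theory Num.Theory.
Local Open Scope ring_scope.

Definition hermT (C : numClosedFieldType) (n : nat) (A : 'M[C]_n) : 'M[C]_n :=
  (map_mx Num.conj A)^T.

Definition real_lin_indep (C : numClosedFieldType) (n k : nat)
    (AI AQ : 'I_k -> 'M[C]_n) : Prop :=
  forall cI cQ : 'I_k -> C,
    (forall i, cI i \is Num.real) -> (forall i, cQ i \is Num.real) ->
    \sum_(i < k) (cI i *: AI i + cQ i *: AQ i) = 0 ->
    forall i, cI i = 0 /\ cQ i = 0.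

Definition unitary_weight_SSD (C : numClosedFieldType) (n k : nat)
    (AI AQ : 'I_k -> 'M[C]_n) : Prop :=
  [/\ real_lin_indep AI AQ,
      (forall i, hermT (AI i) *m AI i = 1%:M /\ hermT (AQ i) *m AQ i = 1%:M),
      (forall i j, i != j ->
         [/\ hermT (AI i) *m AQ j + hermT (AQ j) *m AI i = 0,
             hermT (AI i) *m AI j + hermT (AI j) *m AI i = 0 &
             hermT (AQ i) *m AQ j + hermT (AQ j) *m AQ i = 0]) &
      ~ (forall i, hermT (AI i) *m AQ i + hermT (AQ i) *m AI i = 0)].

(* Normalized: A_{1I} = I_n, where symbol 1 is the index with value 0. *)
Definition normalized (C : numClosedFieldType) (n k : nat)
    (AI : 'I_k -> 'M[C]_n) : Prop :=
  forall i : 'I_k, nat_of_ord i = 0%N -> AI i = 1%:M.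

(* Main.v *)
Require Import Defs.
From HB Require Import structures.
From mathcomp Require Import all_boot all_order all_algebra.
From mathcomp Require Import spectral ring zify.
Set Implicit Arguments. Unset Strict Implicit. Unset Printing Implicit Defensive.
Import Order.TTheory GRing.Theory Num.Theory.
Local Open Scope ring_scope.

Lemma mxvecZ' (C : fieldType) m n (a : C) (M : 'M[C]_(m, n)) : mxvec (a *: M) = a *: mxvec M.
Proof. by apply/rowP => x; case/mxvec_indexP: x => i j; rewrite mxE !mxvecE mxE. Qed.

Section Core.
Variables (C : numClosedFieldType) (r k : nat) (g : 'I_k -> 'M[C]_r) (A : {set 'I_k}).
Hypothesis hsq : forall i, i \in A -> g i *m g i = - 1%:M.
Hypothesis hac : forall i j, i \in A -> j \in A -> i != j -> g i *m g j = - (g j *m g i).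

Local Notation S0 := (set0 : {set 'I_k}).
Definition mono (S : {set 'I_k}) := foldr (fun i M => g i *m M) 1%:M (enum S).
Definition sgn i (S : {set 'I_k}) : C := (-1) ^+ count (predC1 i) (enum S).

Lemma mono_comm_seq i (s : seq 'I_k) : i \in A -> all (mem A) s ->
  g i *m foldr (fun i M => g i *m M) 1%:M s =
  (-1) ^+ count (predC1 i) s *: (foldr (fun i M => g i *m M) 1%:M s *m g i).
Proof.
move=> iA; elim: s => [|j s IH] /=; first by rewrite expr0 scale1r mulmx1 mul1mx.
move=> /andP [jA sA]; rewrite mulmxA.
have [->|ij] := eqVneq j i.
  rewrite /= add0n; set F := foldr _ _ s.
  by rewrite -[g i *m g i *m F]mulmxA [in LHS]IH // -scalemxAr mulmxA.
set F := foldr _ _ s.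
rewrite hac 1?eq_sym // /= add1n exprS mulN1r scaleNr.
by rewrite mulNmx -[g j *m g i *m F]mulmxA [in LHS]IH // -scalemxAr mulmxA.
Qed.

Lemma mono_comm i (S : {set 'I_k}) : i \in A -> S \subset A -> g i *m mono S = sgn i S *: (mono S *m g i).
Proof.
move=> iA SA; apply: mono_comm_seq => //; apply/allP => x; rewrite mem_enum => xS.
exact: (subsetP SA).
Qed.

Lemma g_unit i : i \in A -> g i \in unitmx.
Proof.
move=> iA; have h : g i *m (- g i) = 1%:M by rewrite mulmxN hsq // opprK.
by case: (mulmx1_unit h).
Qed.

Lemma mono_unit (S : {set 'I_k}) : S \subset A -> mono S \in unitmx.
Proof.
move=> SA; rewrite /mono; have : all (mem A) (enum S).
  by apply/allP => x; rewrite mem_enum => xS; exact: (subsetP SA).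
elim: (enum S) => [|j s IH] /=; first by rewrite unitmx1.
by move=> /andP [jA sA]; rewrite unitmx_mul g_unit // IH.
Qed.

Lemma sgn_odd i (S : {set 'I_k}) : sgn i S = (-1) ^+ (odd #|S| (+) (i \in S)).
Proof.
rewrite /sgn -signr_odd; congr (_ ^+ _).
have h := count_predC (pred1 i) (enum S).
rewrite -cardE count_uniq_mem ?enum_uniq // mem_enum in h.
have -> : count (predC1 i) (enum S) = count (predC (pred1 i)) (enum S).
  by apply: eq_count => x /=.
by rewrite -h oddD; case: (i \in S) => //=; case: odd.
Qed.
Hypothesis hev : ~~ odd #|A|.

Lemma sgn_neq (b b' : bool) : b != b' -> (-1) ^+ b = - ((-1) ^+ b' : C).
Proof. by move: b b' => [] []; rewrite //= ?expr0 ?expr1 ?opprK. Qed.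

Lemma sgn_sep (S T : {set 'I_k}) : S \subset A -> T \subset A -> S != T ->
  exists2 i, i \in A & sgn i S = - sgn i T.
Proof.
move=> SA TA ST.
suff [i iA hi] : exists2 i, i \in A &
    (odd #|S| (+) (i \in S)) != (odd #|T| (+) (i \in T)).
  by exists i => //; rewrite !sgn_odd; apply: sgn_neq.
have [eST|nST] := eqVneq (odd #|S|) (odd #|T|).
  have : ~~ [forall x, (x \in S) == (x \in T)].
    apply/negP => /forallP h; apply: (negP ST); apply/eqP/setP => x; exact/eqP/(h x).
  move=> /forallPn [i /= hi]; exists i; last first.
    by rewrite eST; move: hi; case: (i \in S); case: (i \in T); case: (odd #|T|).
  by case iS: (i \in S) hi; case iT: (i \in T) => //= _; [exact: (subsetP SA) | exact: (subsetP TA)].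
have [[i /andP [iA hi]]|none] := @existsP _ (fun i => (i \in A) && ((i \in S) == (i \in T))).
  by exists i => //; rewrite (eqP hi); case: (i \in T); rewrite ?addbT ?addbF // (inj_eq negb_inj).
exfalso; move: nST; apply/negP; rewrite negbK.
have eT : T = A :\: S.
  apply/setP => x; rewrite !inE.
  case xA: (x \in A); last first.
    rewrite andbF; apply/negbTE/negP => xT; by rewrite (subsetP TA) in xA.
  have h : ~~ ((x \in S) == (x \in T)).
    by apply/negP => e; apply: none; exists x; rewrite xA e.
  by move: h; case: (x \in S); case: (x \in T).
rewrite eT cardsD (setIidPr SA) oddB ?subset_leq_card // (negbTE hev).
by case: odd.
Qed.
Lemma tr_anti (K : 'M[C]_r) i : i \in A -> g i *m K = - (K *m g i) -> \tr K = 0.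
Proof.
move=> iA h; have u := g_unit iA.
have e : \tr K = - \tr K.
  rewrite -{1}(mulKmx u K) h mulmxN linearN /= mxtrace_mulC -mulmxA.
  by rewrite mulmxV // mulmx1.
have : \tr K *+ 2 = 0 by rewrite mulr2n {1}e addNr.
by move/eqP; rewrite mulrn_eq0 /= => /eqP.
Qed.

Lemma sgn_sq i S : sgn i S * sgn i S = 1.
Proof. by rewrite /sgn -expr2 sqrr_sign. Qed.

Lemma inv_comm i (T : {set 'I_k}) : i \in A -> T \subset A ->
  g i *m invmx (mono T) = sgn i T *: (invmx (mono T) *m g i).
Proof.
move=> iA TA; have uT := mono_unit TA; have h := mono_comm iA TA.
have e : invmx (mono T) *m g i = sgn i T *: (g i *m invmx (mono T)).
  rewrite -[LHS]mulmx1 -(mulmxV uT) !mulmxA -[invmx (mono T) *m g i *m mono T]mulmxA h.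
  by rewrite -scalemxAr scalemxAl mulmxA -scalemxAl mulVmx // -scalemxAl mul1mx -scalemxAl.
by rewrite e scalerA sgn_sq scale1r.
Qed.

Lemma tr_mono (S T : {set 'I_k}) : S \subset A -> T \subset A -> S != T ->
  \tr (invmx (mono T) *m mono S) = 0.
Proof.
move=> SA TA ST; have [i iA hi] := sgn_sep SA TA ST.
apply: (tr_anti iA).
rewrite mulmxA inv_comm // -scalemxAl -mulmxA mono_comm // hi.
by rewrite -scalemxAr scalerA mulrN sgn_sq scaleN1r mulmxA.
Qed.

Lemma coef_tr (P : seq {set 'I_k}) (c : 'I_(size P) -> C) (t : 'I_(size P)) :
  uniq P -> all (fun S : {set 'I_k} => S \subset A) P ->
  \tr (invmx (mono (nth S0 P t)) *m \sum_(t0 < size P) c t0 *: mono (nth S0 P t0))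
  = c t * r%:R.
Proof.
move=> uP aP.
have sub : forall t0 : 'I_(size P), nth S0 P t0 \subset A.
  by move=> t0; apply: (allP aP); rewrite mem_nth.
rewrite mulmx_sumr raddf_sum (bigD1 t) //= big1 ?addr0.
  by rewrite -scalemxAr mulVmx ?mono_unit // mxtraceZ mxtrace1.
move=> t0 ne; rewrite -scalemxAr mxtraceZ tr_mono ?mulr0 //.
by rewrite nth_uniq.
Qed.

Definition PA := enum (powerset A).
Definition Mons : 'M[C]_(size PA, r * r) := \matrix_(t < size PA) mxvec (mono (nth S0 PA t)).

Lemma PA_uniq : uniq PA. Proof. exact: enum_uniq. Qed.
Lemma PA_sub : all (fun S : {set 'I_k} => S \subset A) PA.
Proof. by apply/allP => S; rewrite mem_enum powersetE. Qed.
Lemma size_PA : size PA = (2 ^ #|A|)%N.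
Proof. by rewrite /PA -cardE card_powerset. Qed.

Lemma Mons_sum (w : 'rV[C]_(size PA)) :
  w *m Mons = mxvec (\sum_(t < size PA) w 0 t *: mono (nth S0 PA t)).
Proof.
rewrite mulmx_sum_row raddf_sum; apply: eq_bigr => t _.
by rewrite rowK -mxvecZ'.
Qed.

Lemma Mons_free : (0 < r)%N -> row_free Mons.
Proof.
move=> r0; rewrite -kermx_eq0; apply/rowV0P => w /sub_kermxP.
rewrite Mons_sum => /eqP; rewrite mxvec_eq0 => /eqP h.
apply/rowP => t; rewrite mxE.
have := coef_tr (fun t0 => w 0 t0) t PA_uniq PA_sub.
rewrite h mulmx0 linear0 => /esym/eqP; rewrite mulf_eq0 pnatr_eq0.
by case/orP => /eqP // r00; rewrite r00 in r0.
Qed.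

Lemma HR_bound : (0 < r)%N -> (2 ^ #|A| <= r * r)%N.
Proof.
move=> r0; have := rank_leq_col Mons.
by rewrite (eqP (Mons_free r0)) size_PA.
Qed.

Lemma SchurC : (2 ^ #|A| = r * r)%N -> (0 < r)%N -> forall M : 'M[C]_r,
  (forall i, i \in A -> g i *m M = M *m g i) -> exists c, M = c%:M.
Proof.
move=> hdim r0 M hM.
have full : row_full Mons.
  by rewrite /row_full (eqP (Mons_free r0)) size_PA hdim.
have /submxP [w hw] : (mxvec M <= Mons)%MS by apply: submx_full.
move: hw; rewrite Mons_sum => /(can_inj mxvecK) hw.
have zero : forall t : 'I_(size PA), nth S0 PA t != set0 -> w 0 t = 0.
  move=> t nt.
  have tA : nth S0 PA t \subset A by apply: (allP PA_sub); rewrite mem_nth.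
  have [i iA hi] := sgn_sep tA (sub0set A) nt.
  have := coef_tr (fun t0 => w 0 t0) t PA_uniq PA_sub.
  rewrite -hw (tr_anti (i := i)) //.
    by move=> /esym/eqP; rewrite mulf_eq0 pnatr_eq0; case/orP => /eqP // r00; rewrite r00 in r0.
  rewrite mulmxA inv_comm // -scalemxAl -mulmxA hM // hi.
  rewrite /sgn enum_set0 /= expr0 scaleN1r.
  by rewrite mulmxA.
have s0 : set0 \in PA by rewrite mem_enum powersetE sub0set.
have t0lt : (index S0 PA < size PA)%N by rewrite index_mem.
pose t0 : 'I_(size PA) := Ordinal t0lt.
have nt0 : nth S0 PA t0 = S0 by rewrite /= nth_index.
exists (w 0 t0); rewrite hw (bigD1 t0) //= big1 ?addr0.
  by rewrite nt0 /mono enum_set0 /= scalemx1.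
move=> t tt0; rewrite zero ?scale0r //; apply: contra tt0 => /eqP e.
apply/eqP/val_inj => /=; apply/eqP; rewrite -(nth_uniq S0 _ _ PA_uniq) //.
by rewrite e nth_index.
Qed.
End Core.

Section Restr.
Variables (C : numClosedFieldType) (n k : nat) (E : 'M[C]_n) (g : 'I_k -> 'M[C]_n) (A : {set 'I_k}).
Hypothesis hac : forall i j, i \in A -> j \in A -> i != j -> g i *m g j = - (g j *m g i).
Hypothesis hev : ~~ odd #|A|.
Hypothesis hst : forall i, i \in A -> stablemx E (g i).

Local Notation V := (row_base E).
Local Notation g' := (fun i => conjmx V (g i)).
Hypothesis hsqR : forall i, i \in A -> conjmx V (g i *m g i) = - 1%:M.

Lemma conjmxN m (W : 'M[C]_(m, n)) f : conjmx W (- f) = - conjmx W f.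
Proof. by rewrite /conjmx mulmxN mulNmx. Qed.

Lemma hst' i : i \in A -> stablemx V (g i).
Proof. by move=> iA; rewrite stablemx_row_base hst. Qed.

Lemma hsq' i : i \in A -> g' i *m g' i = - 1%:M.
Proof.
by move=> iA; rewrite -conjmxM ?inE ?hst' // hsqR.
Qed.

Lemma hac' i j : i \in A -> j \in A -> i != j -> g' i *m g' j = - (g' j *m g' i).
Proof.
by move=> iA jA ij; rewrite -!conjmxM ?inE ?hst' // hac // conjmxN.
Qed.

Lemma rank_pos : E != 0 -> (0 < \rank E)%N.
Proof. by rewrite lt0n mxrank_eq0. Qed.

Lemma restr_HR : E != 0 -> (2 ^ #|A| <= \rank E * \rank E)%N.
Proof.
move=> E0; exact: (HR_bound hsq' hac' hev (rank_pos E0)).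
Qed.

Lemma restr_Schur : (2 ^ #|A| = \rank E * \rank E)%N -> E != 0 ->
  forall M : 'M[C]_n, stablemx E M -> (forall i, i \in A -> g i *m M = M *m g i) ->
  exists c, forall m (W : 'M[C]_(m, n)), (W <= E)%MS -> W *m M = c *: W.
Proof.
move=> hdim E0 M sM hM.
have sM' : stablemx V M by rewrite stablemx_row_base.
have [c hc] : exists c, conjmx V M = c%:M.
  apply: (SchurC hsq' hac' hev hdim (rank_pos E0)) => i iA.
  by rewrite -!conjmxM ?inE ?hst' // hM.
have VM : V *m M = c *: V.
  by rewrite -(mulmxKpV sM') -/(conjmx V M) hc mul_scalar_mx.
exists c => m W WE.
have WV : (W <= V)%MS by rewrite eq_row_base.
by rewrite -{1}(mulmxKpV WV) -[W *m pinvmx V *m V *m M]mulmxA VM -scalemxAr mulmxKpV.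
Qed.
End Restr.

Lemma half_lemma (C : numClosedFieldType) (u cp cm d b : C) :
  u + u = cp * (d + b) + cm * (d - b) ->
  u = (cp + cm) / 2 * d + (cp - cm) / 2 * b.
Proof.
move=> e; have two0 : (2 : C) != 0 by rewrite pnatr_eq0.
have -> : u = (u + u) / 2 by field.
by rewrite e; field.
Qed.

Lemma half_lemma2 (C : numClosedFieldType) (u cp cm b : C) (bb : bool) :
  u + u = cp * (bb%:R + b) + cm * (bb%:R - b) ->
  u = (cp + cm) / 2 *+ bb + (cp - cm) / 2 * b.
Proof.
move=> e; have two0 : (2 : C) != 0 by rewrite pnatr_eq0.
have -> : u = (u + u) / 2 by field.
by rewrite e; clear e; case: bb; rewrite /= ?mulr1n ?mulr0n; field.
Qed.

Lemma solveB (C : numClosedFieldType) (P Q b : C) (bb : bool) : P * Q != 0 ->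
  - ((P ^+ 2 + Q ^+ 2) *+ bb) - 2 * P * Q * b = - (1 *+ bb) ->
  b = (1 - (P ^+ 2 + Q ^+ 2)) / (2 * P * Q) *+ bb.
Proof.
move=> PQ e.
have two0 : (2 : C) != 0 by rewrite pnatr_eq0.
have P0 : P != 0 by apply: contra PQ => /eqP ->; rewrite mul0r.
have Q0 : Q != 0 by apply: contra PQ => /eqP ->; rewrite mulr0.
have e2 : 2 * P * Q * b = (1 - (P ^+ 2 + Q ^+ 2)) *+ bb.
  apply/eqP; rewrite -subr_eq0.
  rewrite (_ : _ - _ = - ((- ((P ^+ 2 + Q ^+ 2) *+ bb) - 2 * P * Q * b) - - (1 *+ bb))).
    by rewrite e subrr oppr0.
  by clear e; case: bb => /=; rewrite ?mulr1n ?mulr0n; ring.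
clear e; move: e2; case: bb => /= e2; rewrite ?mulr1n ?mulr0n in e2 *.
  have -> : b = 2 * P * Q * b / (2 * P * Q) by field; rewrite Q0 P0.
  by rewrite e2.
have -> : b = 2 * P * Q * b / (2 * P * Q) by field; rewrite Q0 P0.
by rewrite e2 mul0r.
Qed.

Section Herm.
Variables (C : numClosedFieldType) (n : nat).
Implicit Types (M N : 'M[C]_n).

Lemma hermT1 : hermT (1%:M : 'M[C]_n) = 1%:M.
Proof. by apply/matrixP => i j; rewrite !mxE eq_sym; case: (i == j); rewrite /= ?conjC1 ?conjC0. Qed.

Lemma hermTM M N : hermT (M *m N) = hermT N *m hermT M.
Proof. by rewrite /hermT map_mxM trmx_mul. Qed.

Lemma hermTK M : hermT (hermT M) = M.
Proof. by apply/matrixP => i j; rewrite !mxE conjCK. Qed.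

Lemma hermTB M N : hermT (M - N) = hermT M - hermT N.
Proof. by apply/matrixP => i j; rewrite !mxE rmorphB. Qed.

Lemma hermTN M : hermT (- M) = - hermT M.
Proof. by apply/matrixP => i j; rewrite !mxE rmorphN. Qed.
End Herm.


Lemma eig_nonzero (C : numClosedFieldType) n (D : 'M[C]_n) :
  D != 0 -> hermT D = - D ->
  exists2 nu : C, nu != 0 & exists2 v : 'rV[C]_n, v != 0 & v *m (D *m D) = nu *: v.
Proof.
move=> D0 hD.
have Dn : D \is normalmx.
  apply/normalmxP.
  have -> : (D ^t* )%sesqui = hermT D by rewrite /hermT map_trmx.
  by rewrite hD mulmxN mulNmx.
move/orthomx_spectralP: Dn => /=.
set P := spectralmx D; set sp := spectral_diag D => hDs.
have uP : P \in unitmx by apply: spectral_unit.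
have PD : P *m D = diag_mx sp *m P by rewrite {1}hDs !mulmxA mulmxV // mul1mx.
have [t ht | none] := pickP (fun t => sp 0 t != 0); last first.
  exfalso; move: D0; rewrite hDs (_ : sp = 0) ?linear0 ?mulmx0 ?mul0mx ?eqxx //.
  by apply/rowP => t; rewrite mxE; move: (none t) => /= /negbFE /eqP.
exists (sp 0 t ^+ 2); first by rewrite expf_neq0.
exists (row t P).
  rewrite rowE mulmx_free_eq0 ?row_free_unit //.
  apply/negP => /eqP/rowP/(_ t); rewrite !mxE !eqxx /= => /eqP; by rewrite oner_eq0.
rewrite mulmxA -row_mul PD row_mul row_diag_mx -scalemxAl -rowE.
by rewrite -scalemxAl -row_mul PD row_mul row_diag_mx -scalemxAl -rowE scalerA expr2.
Qed.

Section Main.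
Variables (C : numClosedFieldType) (a : nat) (ha : (2 <= a)%N)
    (AI AQ : 'I_(2 * a) -> 'M[C]_(2 ^ a)).
Hypothesis Hu : unitary_weight_SSD AI AQ.
Hypothesis Hn : normalized AI.
Variable i1 : 'I_(2 * a).
Hypothesis hi1 : nat_of_ord i1 = 0%N.

Local Notation n := (2 ^ a)%N.
Local Notation B := (AQ i1).
Local Notation X := AI.
Local Notation Y := AQ.

Lemma npos : (0 < n)%N. Proof. by rewrite expn_gt0. Qed.

Lemma AI1 : AI i1 = 1%:M. Proof. exact: Hn. Qed.

Lemma Hlin : real_lin_indep AI AQ. Proof. by case: Hu. Qed.
Lemma Hunit i : hermT (AI i) *m AI i = 1%:M /\ hermT (AQ i) *m AQ i = 1%:M.
Proof. by case: Hu => _ h _ _; apply: h. Qed.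
Lemma Hrel i j : i != j ->
         [/\ hermT (AI i) *m AQ j + hermT (AQ j) *m AI i = 0,
             hermT (AI i) *m AI j + hermT (AI j) *m AI i = 0 &
             hermT (AQ i) *m AQ j + hermT (AQ j) *m AQ i = 0].
Proof. by case: Hu => _ _ h _; apply: h. Qed.

Lemma contra1 j (s : C) : s ^+ 2 = 1 -> AQ j = s *: AI j -> False.
Proof.
move=> s2 hY.
have sr : s \is Num.real.
  by move/eqP: s2; rewrite sqrf_eq1 => /orP [] /eqP ->; rewrite ?rpredN rpred1.
have := @Hlin (fun i => if i == j then - s else 0) (fun i => if i == j then 1 else 0).
case/(_ _ _ _ j).
- by move=> i; case: (i == j); rewrite ?rpredN ?rpred0.
- by move=> i; case: (i == j); rewrite ?rpred1 ?rpred0.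
- rewrite (bigD1 j) //= big1 ?addr0 ?eqxx.
    by rewrite hY scale1r scaleNr addNr.
  by move=> i /negbTE ->; rewrite !scale0r addr0.
by rewrite eqxx => _ /eqP; rewrite oner_eq0.
Qed.

Lemma rel_aux (M N : 'M[C]_n) : - M + N = 0 -> N = M.
Proof. by move=> h; apply/eqP; rewrite -subr_eq0 addrC h. Qed.
Lemma rel_aux2 (M N : 'M[C]_n) : - M + - N = 0 -> M = - N.
Proof. by move=> h; apply/eqP; rewrite -subr_eq0 opprK -oppr_eq0 opprD h. Qed.

Lemma skewX l : l != i1 -> hermT (X l) = - X l.
Proof.
move=> l1; have [_ h _] := @Hrel i1 l ltac:(by rewrite eq_sym).
rewrite AI1 hermT1 mul1mx mulmx1 in h.
by apply/eqP; rewrite -addr_eq0 addrC h.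
Qed.

Lemma skewY l : l != i1 -> hermT (Y l) = - Y l.
Proof.
move=> l1; have [h _ _] := @Hrel i1 l ltac:(by rewrite eq_sym).
rewrite AI1 hermT1 mul1mx mulmx1 in h.
by apply/eqP; rewrite -addr_eq0 addrC h.
Qed.

Lemma sqX l : l != i1 -> X l *m X l = - 1%:M.
Proof. by move=> l1; have [h _] := Hunit l; rewrite skewX // mulNmx in h; rewrite -h opprK. Qed.

Lemma sqY l : l != i1 -> Y l *m Y l = - 1%:M.
Proof. by move=> l1; have [_ h] := Hunit l; rewrite skewY // mulNmx in h; rewrite -h opprK. Qed.

Lemma acXX l m : l != i1 -> m != i1 -> l != m -> X l *m X m = - (X m *m X l).
Proof.
move=> l1 m1 lm; have [_ h _] := Hrel lm.
by rewrite !skewX // !mulNmx in h; apply: rel_aux2.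
Qed.

Lemma acYY l m : l != i1 -> m != i1 -> l != m -> Y l *m Y m = - (Y m *m Y l).
Proof.
move=> l1 m1 lm; have [_ _ h] := Hrel lm.
by rewrite !skewY // !mulNmx in h; apply: rel_aux2.
Qed.

Lemma acXY l m : l != i1 -> m != i1 -> l != m -> X l *m Y m = - (Y m *m X l).
Proof.
move=> l1 m1 lm; have [h _ _] := Hrel lm.
by rewrite skewX // skewY // !mulNmx in h; apply: rel_aux2.
Qed.

Lemma hBX l : l != i1 -> hermT B *m X l = X l *m B.
Proof.
move=> l1; have [h _ _] := Hrel l1.
by rewrite (skewX l1) mulNmx in h; apply: rel_aux.
Qed.

Lemma hBY l : l != i1 -> hermT B *m Y l = Y l *m B.
Proof.
move=> l1; have [_ _ h] := @Hrel i1 l ltac:(by rewrite eq_sym).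
by rewrite (skewY l1) mulNmx addrC in h; apply: rel_aux.
Qed.

Lemma BhB : B *m hermT B = 1%:M.
Proof. by have [_ h] := Hunit i1; apply: mulmx1C. Qed.
Lemma hBB : hermT B *m B = 1%:M.
Proof. by have [_ h] := Hunit i1. Qed.

Local Notation D := (B - hermT B).

Lemma B_conj Z : hermT B *m Z = Z *m B -> B *m Z = Z *m hermT B.
Proof.
move=> h; have e : B *m Z *m (B *m hermT B) = B *m Z by rewrite BhB mulmx1.
by rewrite -e mulmxA -(mulmxA B Z B) -h mulmxA BhB mul1mx.
Qed.

Lemma D_anti Z : hermT B *m Z = Z *m B -> D *m Z = - (Z *m D).
Proof. by move=> h; rewrite mulmxBl (B_conj h) h mulmxBr opprB. Qed.

Lemma hD : hermT D = - D.
Proof. by rewrite hermTB hermTK opprB. Qed.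

Lemma D2_comm Z : hermT B *m Z = Z *m B -> (D *m D) *m Z = Z *m (D *m D).
Proof.
move=> h; have e := D_anti h.
by rewrite -[LHS]mulmxA e mulmxN [in LHS]mulmxA e mulNmx opprK -mulmxA.
Qed.

Lemma conjmxZ m (W : 'M[C]_(m, n)) (s : C) f : conjmx W (s *: f) = s *: conjmx W f.
Proof. by rewrite /conjmx -scalemxAr -scalemxAl. Qed.

Lemma card2a : #|[set: 'I_(2 * a)]| = (2 * a)%N.
Proof. by rewrite cardsT card_ord. Qed.

Lemma even2a : ~~ odd (2 * a).
Proof. by rewrite oddM. Qed.

Lemma n2 : (2 ^ (2 * a) = n * n)%N.
Proof. by rewrite mul2n -addnn expnD. Qed.

Definition gU (U : 'M[C]_n) := fun i => if i == i1 then U else X i.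

Lemma gU_ac (U : 'M[C]_n) : (forall l, l != i1 -> U *m X l = - (X l *m U)) ->
  forall i j, i \in [set: 'I_(2 * a)] -> j \in [set: 'I_(2 * a)] -> i != j ->
  gU U i *m gU U j = - (gU U j *m gU U i).
Proof.
move=> hU i j _ _ ij; rewrite /gU.
have [ei|ni] := eqVneq i i1; have [ej|nj] := eqVneq j i1.
- by rewrite ei ej eqxx in ij.
- by rewrite hU.
- by rewrite hU // opprK.
- exact: acXX.
Qed.

Lemma D_scalar : D != 0 -> exists2 nu : C, nu != 0 & D *m D = nu%:M.
Proof.
move=> D0; have [nu nu0 [v v0 hv]] := eig_nonzero D0 hD.
exists nu => //.
set c := sqrtC (- nu).
have c2 : c ^+ 2 = - nu by apply: sqrtCK.
have c0 : c != 0 by rewrite sqrtC_eq0 oppr_eq0.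
pose U := c^-1 *: D.
have hUX : forall l, l != i1 -> U *m X l = - (X l *m U).
  by move=> l l1; rewrite -scalemxAl (D_anti (hBX l1)) -scalemxAr scalerN.
have cnu : c^-1 * c^-1 * nu = -1.
  by rewrite -invfM -expr2 c2 invrN mulNr mulVf.
pose E := eigenspace (D *m D) nu.
have E0 : E != 0.
  apply: contra v0 => /eqP E0; rewrite -submx0 -E0; exact/eigenspaceP.
have hst : forall i, i \in [set: 'I_(2 * a)] -> stablemx E (gU U i).
  move=> i _; apply: comm_mx_stable_eigenspace; rewrite /comm_mx /gU.
  case: eqP => [_|/eqP i1']; last exact: D2_comm (hBX i1').
  by rewrite -!scalemxAr -!scalemxAl !mulmxA.
have hsqR : forall i, i \in [set: 'I_(2 * a)] -> conjmx (row_base E) (gU U i *m gU U i) = - 1%:M.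
  move=> i _; rewrite /gU; case: eqP => [_|/eqP i1'].
    rewrite -scalemxAr -scalemxAl !conjmxZ (conjmx_eigenvalue (a := nu)).
    - by rewrite scalerA scale_scalar_mx cnu raddfN.
    - by rewrite eq_row_base.
    - exact: row_base_free.
  by rewrite sqX // conjmxN conjmx_scalar // row_base_free.
have := restr_HR (gU_ac hUX) _ hst hsqR E0.
rewrite card2a => /(_ even2a); rewrite n2 => hle.
have rE : \rank E = n.
  apply/eqP; rewrite eqn_leq rank_leq_col /=.
  by rewrite leqNgt; apply/negP => lt; move: hle; rewrite leqNgt ltn_mul.
have : (1%:M <= E)%MS by rewrite sub1mx /row_full rE.
by move/eigenspaceP; rewrite mul1mx scalemx1.
Qed.

Lemma scal_inj (x y : C) : x%:M = y%:M :> 'M[C]_n -> x = y.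
Proof. by move/matrixP/(_ (Ordinal npos) (Ordinal npos)); rewrite !mxE eqxx. Qed.

Lemma comm_prod (G P Q : 'M[C]_n) : G *m P = - (P *m G) -> G *m Q = - (Q *m G) ->
  G *m (P *m Q) = (P *m Q) *m G.
Proof.
move=> hP hQ; rewrite mulmxA hP mulNmx -[P *m G *m Q]mulmxA hQ mulmxN opprK mulmxA //.
Qed.

Lemma anti_comb (G P Q : 'M[C]_n) (s : C) : G *m P = - (P *m G) -> G *m Q = - (Q *m G) ->
  G *m (P + s *: Q) = - ((P + s *: Q) *m G).
Proof.
move=> hP hQ; rewrite mulmxDr mulmxDl -scalemxAr -scalemxAl hP hQ scalerN opprD //.
Qed.

Lemma expand4 (Yj Yl Xj Xl : 'M[C]_n) (s u : C) :
  Yj *m Yl = - (Yl *m Yj) -> Xj *m Yl = - (Yl *m Xj) -> Xl *m Yj = - (Yj *m Xl) ->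
  Xj *m Xl = - (Xl *m Xj) ->
  (Yj + s *: Xj) *m (Yl + u *: Xl) + (Yl + u *: Xl) *m (Yj + s *: Xj) = 0.
Proof.
move=> h1 h2 h3 h4.
rewrite !mulmxDl !mulmxDr -!scalemxAl -!scalemxAr !scalerA h1 h2 h3 h4.
move: (Yl *m Yj) (Yl *m Xj) (Yj *m Xl) (Xl *m Xj) => P Q R S.
by apply/matrixP => x y; rewrite !mxE; ring.
Qed.

Section NoU.
Variable U : 'M[C]_n.
Hypothesis hUU : U *m U = - 1%:M.
Hypothesis hUX : forall l, l != i1 -> U *m X l = - (X l *m U).
Hypothesis hUY : forall l, l != i1 -> U *m Y l = - (Y l *m U).

Local Notation g := (gU U).

Lemma gsq i : i \in [set: 'I_(2 * a)] -> g i *m g i = - 1%:M.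
Proof. by move=> _; rewrite /gU; case: eqP => [//|/eqP i1']; exact: sqX. Qed.

Local Notation hac := (gU_ac hUX).
Lemma hevT : ~~ odd #|[set: 'I_(2 * a)]|. Proof. by rewrite card2a even2a. Qed.
Lemma hdimT : (2 ^ #|[set: 'I_(2 * a)]| = n * n)%N. Proof. by rewrite card2a n2. Qed.

Local Notation Om := (mono g [set: 'I_(2 * a)]).

Lemma Om_unit : Om \in unitmx.
Proof. exact: (mono_unit gsq (subsetT _)). Qed.

Lemma Om_anti i : g i *m Om = - (Om *m g i).
Proof.
rewrite (mono_comm hac (in_setT i) (subsetT _)) sgn_odd card2a (negbTE even2a) in_setT.
by rewrite /= expr1 scaleN1r.
Qed.

Lemma g_anti_X m i : m != i1 -> i != m -> g i *m X m = - (X m *m g i).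
Proof.
move=> m1 im; rewrite /gU; case: eqP => [_|/eqP i1']; first exact: hUX.
exact: acXX.
Qed.

Lemma g_anti_Y m i : m != i1 -> i != m -> g i *m Y m = - (Y m *m g i).
Proof.
move=> m1 im; rewrite /gU; case: eqP => [_|/eqP i1']; first exact: hUY.
exact: acXY.
Qed.

Lemma W_form m : m != i1 -> exists2 s : C, True &
  exists2 t : C, t != 0 & Y m + s *: X m = t *: invmx Om.
Proof.
move=> m1.
have [h hh] : exists h, Y m *m X m + X m *m Y m = h%:M.
  apply: (SchurC gsq hac hevT hdimT npos) => i _.
  have [im|nim] := eqVneq i m.
    rewrite /gU im (negbTE m1) mulmxDr mulmxDl !mulmxA sqX // mulNmx mul1mx.
    by rewrite -[Y m *m X m *m X m]mulmxA sqX // mulmxN mulmx1 addrC.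
  by rewrite mulmxDr mulmxDl !comm_prod ?g_anti_X ?g_anti_Y.
pose W := Y m + (h / 2) *: X m.
have Wa : forall i, g i *m W = - (W *m g i).
  move=> i; have [im|nim] := eqVneq i m; last first.
    by apply: anti_comb; [apply: g_anti_Y | apply: g_anti_X].
  rewrite /gU im (negbTE m1); apply/eqP; rewrite -addr_eq0.
  rewrite /W mulmxDr mulmxDl -!scalemxAr -!scalemxAl sqX //.
  by rewrite addrACA [X m *m Y m + _]addrC hh -scalerDl -splitr scalerN scalemx1 addrN.

have [t ht] : exists t, W *m Om = t%:M.
  apply: (SchurC gsq hac hevT hdimT npos) => i _.
  by rewrite mulmxA Wa mulNmx -[W *m g i *m Om]mulmxA Om_anti mulmxN opprK mulmxA.
exists (h / 2) => //; exists t; last first.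
  by rewrite -/W -[W](mulmxK Om_unit) ht mul_scalar_mx.
apply/negP => /eqP t0.
have W0 : W = 0 by rewrite -[W](mulmxK Om_unit) ht t0 raddf0 mul0mx.
have hY : Y m = (- (h / 2)) *: X m.
  by apply/eqP; rewrite scaleNr -addr_eq0 -/W W0.
apply: (contra1 _ hY).
have := sqY m1; rewrite hY -scalemxAl -scalemxAr scalerA sqX // scalerN.
move/oppr_inj; rewrite scalemx1 => /scal_inj; rewrite expr2.
by [].
Qed.

Lemma noU : False.
Proof.
have lt1 : (1 < 2 * a)%N by lia.
have lt2 : (2 < 2 * a)%N by lia.
pose j : 'I_(2 * a) := Ordinal lt1.
pose l : 'I_(2 * a) := Ordinal lt2.
have j1 : j != i1 by apply/eqP => /(congr1 val); rewrite /= hi1.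
have l1 : l != i1 by apply/eqP => /(congr1 val); rewrite /= hi1.
have jl : j != l by apply/eqP => /(congr1 val).
have [sj _ [tj tj0 hj]] := W_form j1.
have [sl _ [tl tl0 hl]] := W_form l1.
have lj : l != j by rewrite eq_sym.
have := expand4 sj sl (acYY j1 l1 jl) (acXY j1 l1 jl) (acXY l1 j1 lj) (acXX j1 l1 jl).
rewrite hj hl -!scalemxAl -!scalemxAr !scalerA -scalerDl => /(congr1 (mulmx^~ (invmx (invmx Om *m invmx Om)))).
rewrite -scalemxAl mulmxV ?unitmx_mul ?unitmx_inv ?Om_unit // mul0mx scalemx1.
have e0 : (0 : 'M[C]_n) = 0%:M by rewrite raddf0.
rewrite e0 => /scal_inj /eqP.
rewrite [tl * tj]mulrC -mulr2n mulrn_eq0 /= mulf_eq0 (negbTE tj0) (negbTE tl0).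
by [].
Qed.

End NoU.

Lemma stepA : B = hermT B.
Proof.
have [h|D0] := eqVneq D 0; first exact: subr0_eq.
exfalso; have [nu nu0 hDD] := D_scalar D0.
set c := sqrtC (- nu).
have c2 : c ^+ 2 = - nu by apply: sqrtCK.
have c0 : c != 0 by rewrite sqrtC_eq0 oppr_eq0.
have cnu : c^-1 * c^-1 * nu = -1.
  by rewrite -invfM -expr2 c2 invrN mulNr mulVf.
pose U := c^-1 *: D.
apply: (@noU U).
- by rewrite /U -scalemxAl -scalemxAr scalerA hDD scale_scalar_mx cnu raddfN.
- by move=> l l1; rewrite /U -scalemxAl (D_anti (hBX l1)) -scalemxAr scalerN.
- by move=> l l1; rewrite /U -scalemxAl (D_anti (hBY l1)) -scalemxAr scalerN.
Qed.

Lemma BB : B *m B = 1%:M.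
Proof. by have := hBB; rewrite -stepA. Qed.
Lemma BX l : l != i1 -> B *m X l = X l *m B.
Proof. by move=> l1; have := hBX l1; rewrite -stepA. Qed.
Lemma BY l : l != i1 -> B *m Y l = Y l *m B.
Proof. by move=> l1; have := hBY l1; rewrite -stepA. Qed.

Local Notation Ep := (eigenspace B 1).
Local Notation Em := (eigenspace B (-1)).

Lemma subp : ((1%:M + B)%R <= Ep)%MS.
Proof. by apply/eigenspaceP; rewrite mulmxDl mul1mx BB scale1r addrC. Qed.
Lemma subm : ((1%:M - B)%R <= Em)%MS.
Proof. by apply/eigenspaceP; rewrite mulmxBl mul1mx BB scaleN1r opprB. Qed.

Lemma Ep0 : Ep != 0.
Proof.
apply/negP => /eqP E0; have := subp; rewrite E0 submx0 => /eqP h.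
apply: (@contra1 i1 (-1)); first by rewrite sqrrN expr1n.
by rewrite AI1 scaleN1r; apply/eqP; rewrite -addr_eq0 addrC h.
Qed.

Lemma Em0 : Em != 0.
Proof.
apply/negP => /eqP E0; have := subm; rewrite E0 submx0 => /eqP h.
apply: (@contra1 i1 1); first by rewrite expr1n.
by rewrite AI1 scale1r; apply/eqP; rewrite -subr_eq0 -opprB h oppr0.
Qed.

Lemma rank_sum : (\rank Ep + \rank Em <= n)%N.
Proof.
rewrite -mxrank_disjoint_sum ?rank_leq_col //.
apply/eqP; rewrite -submx0; apply/rV_subP => v; rewrite sub_capmx.
case/andP => /eigenspaceP h1 /eigenspaceP h2.
have -> : v = 0; last exact: sub0mx.
apply/rowP => x; move: h1; rewrite h2 => /rowP/(_ x); rewrite !mxE => e.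
have : v 0 x *+ 2 = 0 by rewrite mulr2n -{1}(mul1r (v 0 x)) -e mulN1r addNr.
by move/eqP; rewrite mulrn_eq0 /= => /eqP.
Qed.

Section StepB.
Variable j : 'I_(2 * a).
Hypothesis j1 : j != i1.

Local Notation Aj := [set l : 'I_(2 * a) | (l != i1) && (l != j)].

Lemma cardAj : #|Aj| = (2 * a - 2)%N.
Proof.
have -> : Aj = ~: [set i1; j].
  by apply/setP => x; rewrite !inE negb_or.
have := cardsC [set i1; j]; rewrite cards2 eq_sym j1 card_ord.
move=> h; lia.
Qed.

Lemma hevj : ~~ odd #|Aj|.
Proof. by rewrite cardAj (_ : (2 * a - 2 = 2 * (a - 1))%N) ?oddM //; lia. Qed.

Lemma hacj : forall l m, l \in Aj -> m \in Aj -> l != m -> X l *m X m = - (X m *m X l).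
Proof. by move=> l m; rewrite !inE => /andP [l1 _] /andP [m1 _]; apply: acXX. Qed.

Lemma hstj e : forall l, l \in Aj -> stablemx (eigenspace B e) (X l).
Proof.
move=> l; rewrite inE => /andP [l1 _]; apply: comm_mx_stable_eigenspace.
exact: BX.
Qed.

Lemma hsqj (E : 'M[C]_n) : forall l, l \in Aj -> conjmx (row_base E) (X l *m X l) = - 1%:M.
Proof.
move=> l; rewrite inE => /andP [l1 _].
by rewrite sqX // conjmxN conjmx_scalar // row_base_free.
Qed.

Lemma half_bound (r : nat) : (0 < r)%N -> (2 ^ #|Aj| <= r * r)%N -> (2 ^ (a - 1) <= r)%N.
Proof.
move=> _; rewrite cardAj (_ : (2 * a - 2 = (a - 1) + (a - 1))%N); last by lia.
rewrite expnD => h; rewrite leqNgt; apply/negP => lt; move: h.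
by rewrite leqNgt ltn_mul.
Qed.

Lemma rank_half e : eigenspace B e != 0 -> (2 ^ (a - 1) <= \rank (eigenspace B e))%N.
Proof.
move=> E0; apply: half_bound; first by rewrite lt0n mxrank_eq0.
exact: (restr_HR hacj hevj (hstj e) (hsqj _) E0).
Qed.

Lemma n_half : n = (2 * 2 ^ (a - 1))%N.
Proof. by rewrite -expnS; congr (2 ^ _)%N; lia. Qed.

Lemma rank_eq e : e = 1 \/ e = -1 -> \rank (eigenspace B e) = (2 ^ (a - 1))%N.
Proof.
have := rank_sum; have := rank_half Ep0; have := rank_half Em0.
move=> hm hp hs; have nh := n_half.
have hs' : (\rank Ep + \rank Em <= 2 * 2 ^ (a - 1))%N by rewrite -nh.
case=> ->; move: hm hp hs'; move: (\rank Ep) (\rank Em) (2 ^ (a - 1))%N => x y p; lia.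
Qed.

Local Notation M := (X j *m Y j).

Lemma schur_j e : e = 1 \/ e = -1 -> eigenspace B e != 0 -> exists c : C,
  forall m (W : 'M[C]_(m, n)), (W <= eigenspace B e)%MS -> W *m M = c *: W.
Proof.
move=> he E0; apply: (restr_Schur hacj hevj (hstj e) (hsqj _)) => //.
- rewrite cardAj (rank_eq he) -expnD; congr (2 ^ _)%N; lia.
- apply: comm_mx_stable_eigenspace.
  by rewrite /comm_mx mulmxA BX // -mulmxA BY // mulmxA.
- move=> l; rewrite inE => /andP [l1 lj].
  by apply: comm_prod; [apply: acXX | apply: acXY].
Qed.

Lemma M_form : exists p q : C, M = p%:M + q *: B.
Proof.
have [cp hp] := schur_j (or_introl erefl) Ep0.
have [cm hm] := schur_j (or_intror erefl) Em0.
have hp' := hp _ _ subp; have hm' := hm _ _ subm.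
have hsum : M + M = cp *: (1%:M + B) + cm *: (1%:M - B).
  by rewrite -hp' -hm' mulmxDl mulmxBl mul1mx addrACA subrr addr0.
exists ((cp + cm) / 2), ((cp - cm) / 2).
move: hsum; move: (X j *m Y j) => M0 hsum.
apply/matrixP => x y; move/matrixP: hsum => /(_ x y); rewrite !mxE.
move: (M0 x y) (B x y) (x == y) => u b bb e.
exact: half_lemma2.
Qed.

Lemma expand2 (Xm Z Bm : 'M[C]_n) (P Q : C) :
  Xm *m Xm = - 1%:M -> Z *m Z = - 1%:M -> Xm *m Z = - Bm -> Z *m Xm = - Bm ->
  (P *: Xm + Q *: Z) *m (P *: Xm + Q *: Z) = - (P ^+ 2 + Q ^+ 2)%:M - (2 * P * Q) *: Bm.
Proof.
move=> h1 h2 h3 h4.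
rewrite !mulmxDl !mulmxDr -!scalemxAl -!scalemxAr !scalerA h1 h2 h3 h4.
clear h3 h4.
by apply/matrixP => x y; rewrite !mxE; case: (x == y); rewrite /= ?mulr1n ?mulr0n; ring.
Qed.

Lemma stepB_final : AQ j = AI j *m B \/ AQ j = - (AI j *m B).
Proof.
have [p [q hM]] := M_form.
have e : X j *m M = - Y j by rewrite mulmxA sqX // mulNmx mul1mx.
have hY : Y j = (- p) *: X j + (- q) *: (X j *m B).
  by rewrite -[Y j]opprK -e hM mulmxDr mul_mx_scalar -scalemxAr opprD !scaleNr.
have ZZ : (X j *m B) *m (X j *m B) = - 1%:M.
  by rewrite mulmxA -[X j *m B *m X j]mulmxA BX // mulmxA sqX // !mulNmx mul1mx BB.
have XZ : X j *m (X j *m B) = - B by rewrite mulmxA sqX // mulNmx mul1mx.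
have ZX : (X j *m B) *m X j = - B by rewrite -mulmxA BX // mulmxA sqX // mulNmx mul1mx.
have hYY := sqY j1; rewrite hY (expand2 _ _ (sqX j1) ZZ XZ ZX) in hYY.
have [PQ0|PQ] := eqVneq ((- p) * (- q)) 0.
  have [P0|Q0] : (- p = 0) \/ (- q = 0).
    by move/eqP: PQ0; rewrite mulf_eq0 => /orP [] /eqP; [left|right].
    rewrite P0 mulr0 mul0r scale0r subr0 expr0n add0r /= in hYY.
    move/oppr_inj/scal_inj/eqP: hYY; rewrite sqrf_eq1 => /orP [] /eqP q1.
      by left; rewrite hY P0 q1 scale0r add0r scale1r.
    by right; rewrite hY P0 q1 scale0r add0r scaleN1r.
  rewrite Q0 mulr0 scale0r subr0 expr0n addr0 /= in hYY.
  move/oppr_inj/scal_inj: hYY => p1.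
  exfalso; apply: (@contra1 j _ p1); by rewrite hY Q0 scale0r addr0.
exfalso.
pose s := (1 - ((- p) ^+ 2 + (- q) ^+ 2)) / (2 * (- p) * (- q)).
have Bs : B = s%:M.
  apply/matrixP => x y; move/matrixP: hYY => /(_ x y); rewrite !mxE.
  move: (B x y) => b; rewrite /s; exact: solveB.
have s1 : s ^+ 2 = 1 by apply: scal_inj; rewrite expr2 scalar_mxM -Bs BB.
by apply: (@contra1 i1 _ s1); rewrite Bs AI1 scalemx1.
Qed.

End StepB.

End Main.

Theorem theorem2 (C : numClosedFieldType) (a : nat) (ha : (2 <= a)%N)
    (AI AQ : 'I_(2 * a) -> 'M[C]_(2 ^ a)) :
  unitary_weight_SSD AI AQ -> normalized AI ->
  forall i1 : 'I_(2 * a), nat_of_ord i1 = 0%N ->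
    [/\ AQ i1 = hermT (AQ i1),
        AQ i1 *m AQ i1 = 1%:M &
        forall i : 'I_(2 * a), i != i1 ->
          AI i *m AQ i1 = AQ i1 *m AI i /\
          (AQ i = AI i *m AQ i1 \/ AQ i = - (AI i *m AQ i1))].
Proof.
move=> Hu Hn i1 hi1; split.
- exact: (stepA ha Hu Hn hi1).
- exact: (BB ha Hu Hn hi1).
- move=> i ii1; split; first by rewrite (BX ha Hu Hn hi1 ii1).
  exact: (stepB_final ha Hu Hn hi1 ii1).
Qed.
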